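(* In the transductive setting, assume $|y(x)|\le M$ for all $x\in X$. Let $W\in\mathbb{R}^{(m+u)\times(m+u)}$ be a symmetric nonnegative weight matrix with all row sums positive, $D$ the diagonal matrix with $D_{ii}=\sum_j W_{ij}$, $Q=I-D^{-1/2}WD^{-1/2}$, and $\mu>0$. For a training set $S$, let $y_S\in\mathbb{R}^{m+u}$ have $i$th entry $y(x_i)$ if $x_i\in S$ and $0$ otherwise, and let the Consistency Method return $h_S=(\mu^{-1}Q+I)^{-1}y_S$. Then for any two training sets $S,S'$ differing in exactly one point, $\|h_S-h_{S'}\|_\infty\le\sqrt2\,M$.
   Context: Transductive setting: fixed full sample $X=\{x_1,\dots,x_{m+u}\}$ with real labels $y(x)$; training set $S\subset X$ of size $m$ with labels revealed, test set $T=X\setminus S$ of size $u$. Two training sets $S,S'$ differ in exactly one point if $S'=(S\setminus\{x\})\cup\{x'\}$ with $x\in S$, $x'\in X\setminus S$. *)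

(* Defs.v *)
(* matrices over an arbitrary real closed field R (covers the reals). *)
From HB Require Import structures.
From mathcomp Require Import all_boot all_order all_algebra.
Set Implicit Arguments. Unset Strict Implicit. Unset Printing Implicit Defensive.
Import Order.TTheory GRing.Theory Num.Theory.
Local Open Scope ring_scope.

Definition degree (R : rcfType) (n : nat) (W : 'M[R]_n) (i : 'I_n) : R :=
  \sum_(j < n) W i j.

Definition Dinvsqrt (R : rcfType) (n : nat) (W : 'M[R]_n) : 'M[R]_n :=
  diag_mx (\row_i (Num.sqrt (degree W i))^-1).

Definition Qmat (R : rcfType) (n : nat) (W : 'M[R]_n) : 'M[R]_n :=
  1%:M - Dinvsqrt W *m W *m Dinvsqrt W.

Definition yS (R : rcfType) (n : nat) (y : 'I_n -> R) (S : {set 'I_n}) : 'cV[R]_n :=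
  \col_i (if i \in S then y i else 0).

Definition hS (R : rcfType) (n : nat) (W : 'M[R]_n) (mu : R)
    (y : 'I_n -> R) (S : {set 'I_n}) : 'cV[R]_n :=
  invmx (mu^-1 *: Qmat W + 1%:M) *m yS y S.

(* Main.v *)
Require Import Defs.
From HB Require Import structures.
From mathcomp Require Import all_boot all_order all_algebra.
Import Order.TTheory GRing.Theory Num.Theory.
Set Implicit Arguments. Unset Strict Implicit.
Local Open Scope ring_scope.


Lemma s_neq0 (R : rcfType) (n : nat) (W : 'M[R]_n) (Wpos : forall i, 0 < \sum_(j < n) W i j) i : Num.sqrt (degree W i) != 0.
Proof. by rewrite sqrtr_eq0 -ltNge; apply: Wpos. Qed.

Lemma Bentry (R : rcfType) (n : nat) (W : 'M[R]_n) i j : (Dinvsqrt W *m W *m Dinvsqrt W) i j = (Num.sqrt (degree W i))^-1 * W i j * (Num.sqrt (degree W j))^-1.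
Proof. by rewrite /Dinvsqrt mul_mx_diag mul_diag_mx !mxE. Qed.

Lemma two_ab (R : rcfType) (a b : R) : a * b *+ 2 <= a ^+ 2 + b ^+ 2.
Proof.
by have := sqr_ge0 (a - b); rewrite sqrrB addrAC subr_ge0.
Qed.

Lemma quad (R : rcfType) (n : nat) (W : 'M[R]_n) (Wsym : W^T = W) (Wnneg : forall i j, 0 <= W i j) (Wpos : forall i, 0 < \sum_(j < n) W i j) (h : 'cV[R]_n) :
  \sum_i h i 0 * (Dinvsqrt W *m W *m Dinvsqrt W *m h) i 0 <= \sum_i h i 0 ^+ 2.
Proof.
set s := fun i => Num.sqrt (degree W i).
set a := fun i => h i 0 / s i.
have ha i : h i 0 = a i * s i by rewrite /a divfK // (s_neq0 Wpos).
clearbody a.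
have Ws i j : W j i = W i j by rewrite -{2}Wsym mxE.
have E1 : \sum_i h i 0 * (Dinvsqrt W *m W *m Dinvsqrt W *m h) i 0
        = \sum_i \sum_j W i j * (a i * a j).
  apply: eq_bigr => i _; rewrite mxE big_distrr /=; apply: eq_bigr => j _.
  rewrite /s Bentry (ha i) (ha j) [a j * s j]mulrC !mulrA (mulfK (s_neq0 Wpos i)).
  by rewrite (mulfVK (s_neq0 Wpos j)) (mulrC (a i)).
have E2 : \sum_i h i 0 ^+ 2 = \sum_i \sum_j W i j * a i ^+ 2.
  apply: eq_bigr => i _; rewrite -big_distrl /= (ha i) exprMn /s sqr_sqrtr.
    by rewrite mulrC.
  exact: ltW (Wpos i).
rewrite E1 E2 -(ler_pM2l (ltr0Sn R 1)) /=.
apply: (le_trans (y := \sum_i \sum_j W i j * (a i ^+ 2 + a j ^+ 2))).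
  rewrite mulr_sumr; apply: ler_sum => i _; rewrite mulr_sumr; apply: ler_sum => j _.
  by rewrite mulrCA mulr_natl; apply: ler_wpM2l => //; apply: two_ab.
have -> : \sum_i \sum_j W i j * (a i ^+ 2 + a j ^+ 2)
   = \sum_i \sum_j W i j * a i ^+ 2 + \sum_i \sum_j W i j * a j ^+ 2.
  rewrite -big_split /=; apply: eq_bigr => i _.
  by rewrite -big_split /=; apply: eq_bigr => j _; rewrite mulrDr.
rewrite [X in _ + X <= _]exchange_big /=.
rewrite [X in _ + X <= _](eq_bigr (fun i => \sum_j W i j * a i ^+ 2)).
  by rewrite mulr_natl mulr2n.
by move=> i _; apply: eq_bigr => j _; rewrite Ws.
Qed.

Lemma keyL (R : rcfType) (n : nat) (W : 'M[R]_n) (Wsym : W^T = W) (Wnneg : forall i j, 0 <= W i j) (Wpos : forall i, 0 < \sum_(j < n) W i j) (mu : R) (hmu : 0 < mu) (h : 'cV[R]_n) :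
  \sum_k h k 0 ^+ 2 <= \sum_k ((mu^-1 *: Qmat W + 1%:M) *m h) k 0 ^+ 2.
Proof.
set B := Dinvsqrt W *m W *m Dinvsqrt W.
set g := h - B *m h.
set c := mu^-1.
have hc : 0 <= c by rewrite /c invr_ge0 ltW.
have EA : (mu^-1 *: Qmat W + 1%:M) *m h = c *: g + h.
  by rewrite /Qmat mulmxDl mul1mx -scalemxAl mulmxBl mul1mx.
have Hg : 0 <= \sum_k g k 0 * h k 0.
  rewrite (eq_bigr (fun k => h k 0 ^+ 2 - h k 0 * (B *m h) k 0)); last first.
    by move=> k _; rewrite /g 2!mxE mulrBl expr2 [(B *m h) k 0 * _]mulrC.
  by rewrite sumrB subr_ge0; exact: (quad Wsym Wnneg Wpos).
rewrite EA.
rewrite [X in _ <= X](eq_bigr (fun k => (c * g k 0) ^+ 2 + (c * (g k 0 * h k 0)) *+ 2 + h k 0 ^+ 2)); last first.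
  by move=> k _; rewrite 2!mxE sqrrD mulrA.
rewrite !big_split /= lerDr; apply: addr_ge0.
  by apply: sumr_ge0 => k _; apply: sqr_ge0.
by rewrite -mulr_sumr; apply: addr_ge0; apply: mulr_ge0.
Qed.

Lemma term_le_sum (R : rcfType) (n : nat) (F : 'I_n -> R) (k : 'I_n) :
  (forall j, 0 <= F j) -> F k <= \sum_j F j.
Proof.
move=> H; rewrite (bigD1 k) //= lerDl; exact: sumr_ge0.
Qed.

Theorem mainTheorem9 (R : rcfType) (m u : nat) (y : 'I_(m + u) -> R) (M : R)
    (hM : forall i, `|y i| <= M)
    (W : 'M[R]_(m + u))
    (Wsym : W^T = W)
    (Wnneg : forall i j, 0 <= W i j)
    (Wpos : forall i, 0 < \sum_(j < m + u) W i j)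
    (mu : R) (hmu : 0 < mu)
    (S : {set 'I_(m + u)}) (hS_card : #|S| = m)
    (x x' : 'I_(m + u)) (hx : x \in S) (hx' : x' \notin S) :
  forall i : 'I_(m + u),
    `|hS W mu y S i 0 - hS W mu y ((S :\ x) :|: [set x']) i 0|
      <= Num.sqrt 2 * M.
Proof.
move=> i.
set S' := (S :\ x) :|: [set x'].
set A := mu^-1 *: Qmat W + 1%:M.
have unitA : A \in unitmx.
  rewrite unitmxE unitfE -det_tr; apply/det0P => -[v vnz vA].
  have Av : A *m v^T = 0 by apply: trmx_inj; rewrite trmx_mul trmxK vA trmx0.
  have := keyL Wsym Wnneg Wpos hmu v^T; rewrite -/A Av => Hs.
  have Z : \sum_k (0 : 'cV[R]_(m+u)) k 0 ^+ 2 = 0.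
    by apply: big1 => k _; rewrite mxE expr0n.
  rewrite Z in Hs.
  move/eqP: vnz; apply; apply/rowP => j; rewrite !mxE.
  have Hj : v^T j 0 ^+ 2 <= 0.
    apply: le_trans Hs; apply: (term_le_sum (F := fun k => v^T k 0 ^+ 2)) => k.
    exact: sqr_ge0.
  have : v^T j 0 ^+ 2 == 0 by rewrite eq_le Hj sqr_ge0.
  by rewrite sqrf_eq0 mxE => /eqP.
set v := yS y S - yS y S'.
have Ediff : hS W mu y S i 0 - hS W mu y S' i 0 = (invmx A *m v) i 0.
  by rewrite /hS /v mulmxBr !mxE.
rewrite Ediff.
set h := invmx A *m v.
have Ah : A *m h = v by rewrite /h mulKVmx.
have M0 : 0 <= M by apply: le_trans (hM x); exact: normr_ge0.
have yM k : y k ^+ 2 <= M ^+ 2.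
  by rewrite -real_normK ?num_real // !expr2; apply: ler_pM => //; exact: normr_ge0.
have xx' : x != x' by apply: contraNneq hx' => <-.
have hv : \sum_k v k 0 ^+ 2 <= 2 * M ^+ 2.
  rewrite (bigD1 x) //= (bigD1 x') /=; last by rewrite eq_sym.
  rewrite big1; last first.
    move=> k /andP [kx kx']; rewrite /v /yS !mxE /S' in_setU in_setD1 in_set1.
    by rewrite (negbTE kx) (negbTE kx') /= orbF subrr expr0n.
  rewrite /v /yS !mxE /S' !in_setU !in_setD1 !in_set1 eqxx (negbTE xx') eq_sym.
  rewrite (negbTE xx') hx (negbTE hx') /= subr0 sub0r sqrrN addr0 mulr_natl mulr2n.
  by rewrite eqxx; apply: lerD.
have hh : h i 0 ^+ 2 <= 2 * M ^+ 2.
  apply: (le_trans _ hv); have := keyL Wsym Wnneg Wpos hmu h; rewrite -/A Ah.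
  apply: le_trans.
  apply: (term_le_sum (F := fun k => h k 0 ^+ 2)) => k; exact: sqr_ge0.
rewrite -sqrtr_sqr -(ger0_norm M0) -sqrtr_sqr -sqrtrM ?ler0n //.
exact: ler_wsqrtr.
Qed.
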